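(* Let $F$ be a field with valuation $v:F\to\mathbb{R}\cup\{\infty\}$ whose value group is a proper dense subgroup of $\mathbb{R}$, $R=\{x\in F:v(x)\ge0\}$, $U=\{f\in R[[X]]:v_0(f)=0\}$ and $T=R[[X]]_U$. Then $R[[X]]$ is a pure $R$-submodule of $T$, and more generally for any index set $I$ the direct product $R[[X]]^I$ is a pure $R$-submodule of $T^I$.
   Context: $v_0\big(\sum_n s_nX^n\big)=\inf\{v(s_n):n\in\mathbb{N}\}$ (a valuation on $R[[X]]$). For a commutative ring $S$ and $S$-module $M$, a submodule $N\subseteq M$ is pure if for every $S$-module $L$ the natural map $N\otimes_S L\to M\otimes_S L$ is injective. *)

(* Defs.v *)
From HB Require Import structures.
From mathcomp Require Import all_boot all_order all_algebra.
From mathcomp Require Import lra.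
From mathcomp Require Import boolp classical_sets functions reals constructive_ereal ereal topology normedtype.
Set Implicit Arguments. Unset Strict Implicit. Unset Printing Implicit Defensive.
Import Order.TTheory GRing.Theory Num.Theory.
Local Open Scope ring_scope.

Record valuation (F : fieldType) (RR : realType) := Valuation {
  vfun :> F -> \bar RR;
  valuation_eq_inf : forall x, vfun x = +oo%E <-> x = 0;
  valuation_neq_ninf : forall x, vfun x != -oo%E;
  valuation_mul : forall x y, vfun (x * y) = (vfun x + vfun y)%E;
  valuation_add : forall x y, (Order.min (vfun x) (vfun y) <= vfun (x + y))%E
}.

Definition value_group (F : fieldType) (RR : realType) (v : valuation F RR)
  : set RR := [set r | exists2 x : F, x != 0 & v x = r%:E].

Section VRing.
Variables (F : fieldType) (RR : realType) (v : valuation F RR).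
Local Open Scope ereal_scope.

Definition vring_pred : {pred F} := fun x => 0 <= v x.

Let vfinE x : x != 0%R -> v x = (fine (v x))%:E.
Proof.
move=> x0; have := valuation_neq_ninf v x; case E: (v x) => [r| |] //= _.
by move/(valuation_eq_inf v): E => /eqP; rewrite (negbTE x0).
Qed.

Let v1 : v 1%R = 0.
Proof.
have := valuation_mul v 1%R 1%R; rewrite mulr1 (vfinE (oner_neq0 F)).
set r := fine _ => /eqP; rewrite -EFinD eqe => /eqP h.
by congr (_%:E); lra.
Qed.

Let vN1 : v (-1)%R = 0.
Proof.
have hn : (-1 : F)%R != 0%R by rewrite oppr_eq0 oner_neq0.
have := valuation_mul v (-1)%R (-1)%R; rewrite mulrNN mulr1 v1.
rewrite (vfinE hn); set r := fine _ => /eqP.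
rewrite -EFinD eqe => /eqP h; congr (_%:E); lra.
Qed.

Let vN x : v (- x)%R = v x.
Proof. by rewrite -mulN1r valuation_mul vN1 add0e. Qed.

Lemma vring_subring_closed : subring_closed vring_pred.
Proof.
split; first by rewrite unfold_in /vring_pred /= v1.
- move=> x y; rewrite !unfold_in /vring_pred /= => hx hy.
  apply: le_trans (valuation_add v x (- y)%R); rewrite vN.
  by rewrite le_min hx hy.
- move=> x y; rewrite !unfold_in /vring_pred /= => hx hy.
  by rewrite valuation_mul adde_ge0.
Qed.

HB.instance Definition _ := GRing.isSubringClosed.Build F vring_pred
  vring_subring_closed.

Record vring := VRing { vval :> F; vvalP : vval \in vring_pred }.
HB.instance Definition _ := [isSub for vval].
HB.instance Definition _ := [Choice of vring by <:].
HB.instance Definition _ := [SubChoice_isSubComNzRing of vring by <:].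
End VRing.

Section PowerSeries.
Variable R : comNzRingType.

Record pseries := PSeries { coefs : nat -> R }.
HB.instance Definition _ := [isNew for coefs].
HB.instance Definition _ := [Choice of pseries by <:].

Lemma pseriesP (a b : pseries) : coefs a =1 coefs b -> a = b.
Proof. by case: a b => a [b] /= /funext ->. Qed.

Definition ps_zero := PSeries (fun=> 0).
Definition ps_add a b := PSeries (fun n => coefs a n + coefs b n).
Definition ps_opp a := PSeries (fun n => - coefs a n).

Let ps_addA : associative ps_add.
Proof. by move=> a b c; apply: pseriesP => n /=; rewrite addrA. Qed.
Let ps_addC : commutative ps_add.
Proof. by move=> a b; apply: pseriesP => n /=; rewrite addrC. Qed.
Let ps_add0 : left_id ps_zero ps_add.
Proof. by move=> a; apply: pseriesP => n /=; rewrite add0r. Qed.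
Let ps_addN : left_inverse ps_zero ps_opp ps_add.
Proof. by move=> a; apply: pseriesP => n /=; rewrite addNr. Qed.

HB.instance Definition _ := GRing.isNmodule.Build pseries ps_addA ps_addC ps_add0.
HB.instance Definition _ := GRing.Nmodule_isZmodule.Build pseries ps_addN.

Definition ps_one := PSeries (fun n => (n == 0)%:R).
Definition ps_mul a b :=
  PSeries (fun n => \sum_(i < n.+1) coefs a i * coefs b (n - i)).

Definition ps_trunc n a : {poly R} := \poly_(i < n.+1) coefs a i.

Let coef_trunc n a i : (i <= n)%N -> (ps_trunc n a)`_i = coefs a i.
Proof. by move=> hi; rewrite coef_poly ltnS hi. Qed.

Let coefM_eq (p p' q q' : {poly R}) n :
  (forall i, (i <= n)%N -> p`_i = p'`_i) -> (forall i, (i <= n)%N -> q`_i = q'`_i) ->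
  (p * q)`_n = (p' * q')`_n.
Proof.
move=> hp hq; rewrite !coefM; apply: eq_bigr => i _.
by rewrite hp ?hq ?leq_subr // -ltnS.
Qed.

Let ps_mulE a b n : coefs (ps_mul a b) n = (ps_trunc n a * ps_trunc n b)`_n.
Proof.
rewrite coefM /=; apply: eq_bigr => i _.
by rewrite !coef_trunc ?leq_subr // -ltnS.
Qed.

Let trunc_mul n a b i : (i <= n)%N ->
  (ps_trunc n (ps_mul a b))`_i = (ps_trunc n a * ps_trunc n b)`_i.
Proof.
move=> hi; rewrite coef_trunc // ps_mulE; apply: coefM_eq => j hj;
by rewrite !coef_trunc // (leq_trans hj).
Qed.

Let ps_mulA : associative ps_mul.
Proof.
move=> a b c; apply: pseriesP => n; rewrite !ps_mulE.
rewrite (@coefM_eq _ (ps_trunc n a) _ (ps_trunc n b * ps_trunc n c)) //;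
  last by move=> i hi; rewrite trunc_mul.
rewrite mulrA; apply: coefM_eq => // i hi; by rewrite trunc_mul.
Qed.

Let ps_mulC : commutative ps_mul.
Proof. by move=> a b; apply: pseriesP => n; rewrite !ps_mulE mulrC. Qed.

Let trunc_one n : ps_trunc n ps_one = 1.
Proof.
apply/polyP => i; rewrite coef_poly coef1 /=.
by case: i => [|i]; rewrite //= if_same.
Qed.

Let ps_mul1 : left_id ps_one ps_mul.
Proof.
by move=> a; apply: pseriesP => n; rewrite ps_mulE trunc_one mul1r coef_trunc.
Qed.

Let trunc_add n a b : ps_trunc n (ps_add a b) = ps_trunc n a + ps_trunc n b.
Proof. by apply/polyP => i; rewrite coefD !coef_poly; case: ifP; rewrite ?addr0. Qed.

Let ps_mulDl : left_distributive ps_mul ps_add.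
Proof.
move=> a b c; apply: pseriesP => n; rewrite (ps_mulE (ps_add a b)) trunc_add mulrDl coefD.
by rewrite -[RHS]/(coefs (ps_mul a c) n + coefs (ps_mul b c) n) (ps_mulE a c) (ps_mulE b c).
Qed.

Let ps_one_neq0 : ps_one != 0.
Proof. by apply/eqP => /(congr1 (coefs^~ 0%N)) /= /eqP; rewrite oner_eq0. Qed.

HB.instance Definition _ := GRing.Zmodule_isComNzRing.Build pseries
  ps_mulA ps_mulC ps_mul1 ps_mulDl ps_one_neq0.

Definition ps_scale (r : R) a := PSeries (fun n => r * coefs a n).

Let ps_scaleA r s a : ps_scale r (ps_scale s a) = ps_scale (r * s) a.
Proof. by apply: pseriesP => n /=; rewrite mulrA. Qed.
Let ps_scale1 : left_id 1 ps_scale.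
Proof. by move=> a; apply: pseriesP => n /=; rewrite mul1r. Qed.
Let ps_scaleDr : right_distributive ps_scale +%R.
Proof. by move=> r a b; apply: pseriesP => n /=; rewrite mulrDr. Qed.
Let ps_scaleDl a : {morph ps_scale^~ a : r s / r + s}.
Proof. by move=> r s; apply: pseriesP => n /=; rewrite mulrDl. Qed.

HB.instance Definition _ := GRing.Zmodule_isLmodule.Build R pseries
  ps_scaleA ps_scale1 ps_scaleDr ps_scaleDl.

Let ps_scaleAl (r : R) (a b : pseries) : r *: (a * b) = (r *: a) * b.
Proof.
apply: pseriesP => n /=; rewrite mulr_sumr; apply: eq_bigr => i _.
by rewrite mulrA.
Qed.

HB.instance Definition _ := GRing.Lmodule_isLalgebra.Build R pseries ps_scaleAl.
HB.instance Definition _ := GRing.Lalgebra_isComAlgebra.Build R pseries.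

Lemma coefs_scale (r : R) a n : coefs (r *: a) n = r * coefs a n.
Proof. by []. Qed.
End PowerSeries.

(** N (x)_S L is the free abelian group on N * L modulo the subgroup generated
    by the bilinearity relations.  An element of the free abelian group is
    represented by a finite formal Z-combination  seq (int * (N * L)); its
    coefficient at a pair p is [fcoef s p]. *)
Section Tensor.
Variable S : comNzRingType.

Definition fcoef (T : eqType) (s : seq (int * T)) (p : T) : int :=
  \sum_(c <- s | c.2 == p) c.1.

Inductive tensor_gen (N L : lmodType S) : Type :=
| TGaddl of N & N & L
| TGaddr of N & L & L
| TGscale of S & N & L.

Definition tensor_gen_expand (N L : lmodType S) (g : tensor_gen N L)
  : seq (int * (N * L)) :=
  match g with
  | TGaddl n1 n2 l => [:: (1, (n1 + n2, l)); (-1, (n1, l)); (-1, (n2, l))]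
  | TGaddr n l1 l2 => [:: (1, (n, l1 + l2)); (-1, (n, l1)); (-1, (n, l2))]
  | TGscale r n l => [:: (1, (r *: n, l)); (-1, (n, r *: l))]
  end.

Definition in_tensor_relations (N L : lmodType S) (s : seq (int * (N * L))) :=
  exists gs : seq (int * tensor_gen N L),
    forall p, fcoef s p =
      fcoef (flatten [seq [seq (g.1 * c.1, c.2) | c <- tensor_gen_expand g.2]
                     | g <- gs]) p.

(** [tensor_zero s] : the element  \sum_i n_i (x) l_i  of N (x)_S L is zero,
    where s = [:: (n_1, l_1); ...; (n_k, l_k)] (every element of N (x) L has
    this form). *)
Definition tensor_zero (N L : lmodType S) (s : seq (N * L)) :=
  in_tensor_relations [seq (1%:Z, x) | x <- s].

Definition tensor_map_injective (N M : lmodType S) (f : N -> M) (L : lmodType S) :=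
  forall s : seq (N * L),
    tensor_zero [seq (f x.1, x.2) | x <- s] -> tensor_zero s.

Definition pure_embedding (N M : lmodType S) (f : N -> M) :=
  [/\ linear f, injective f & forall L : lmodType S, tensor_map_injective f L].
End Tensor.

(** * Localization (characterized by its standard elementwise property) *)
Definition is_localization (A B : comNzRingType) (U : set A)
    (iota : {rmorphism A -> B}) :=
  [/\ forall u, U u -> exists b, b * iota u = 1,
      forall b, exists a u, U u /\ b * iota u = iota a
    & forall a, iota a = 0 -> exists2 u, U u & u * a = 0].

Definition v0 (F : fieldType) (RR : realType) (v : valuation F RR)
    (f : pseries (vring v)) : \bar RR :=
  ereal_inf (range (fun n => v (vval (coefs f n)))).

Definition map_pow (I : Type) (A B : Type) (f : A -> B) (x : I -> A) : I -> B :=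
  fun i => f (x i).

(* Main.v *)
Require Import Defs.
From HB Require Import structures.
From mathcomp Require Import all_boot all_order all_algebra.
From mathcomp Require Import boolp classical_sets functions reals constructive_ereal ereal topology normedtype.
From mathcomp Require Import lra zify.
Import Order.TTheory GRing.Theory Num.Theory numFieldNormedType.Exports.
Local Open Scope ring_scope.

Section Solve.
Variable R : comNzRingType.
Hypothesis hcmp : forall a b : R, (exists c, b = c * a) \/ (exists c, a = c * b).
Variables (N M : lmodType R) (f : N -> M).
Hypothesis flin : linear f.
Hypothesis finj : injective f.
Hypothesis ftf : forall (r : R) (m : M) (x : N), r != 0 -> r *: m = f x -> exists x', m = f x'.

Let f0 : f 0 = 0.
Proof.
move: (flin 1 0 0); rewrite scale1r addr0 scale1r => h.
by apply: (addrI (f 0)); rewrite addr0 -h.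
Qed.
Let fD x y : f (x + y) = f x + f y.
Proof. by have := flin 1 x y; rewrite !scale1r. Qed.
Let fZ a x : f (a *: x) = a *: f x.
Proof. by have := flin a x 0; rewrite !addr0 f0 addr0. Qed.
Let fN x : f (- x) = - f x.
Proof. by rewrite -scaleN1r fZ scaleN1r. Qed.
Let fB x y : f (x - y) = f x - f y.
Proof. by rewrite fD fN. Qed.
Let fsum (s : seq nat) (G : nat -> N) : f (\sum_(j <- s) G j) = \sum_(j <- s) f (G j).
Proof. elim: s => [|a s IH]; first by rewrite !big_nil f0. by rewrite !big_cons fD IH. Qed.

Lemma pivot_exists (a : nat -> R) (s : seq nat) :
  (exists2 j, j \in s & a j != 0) ->
  exists j, [/\ j \in s, a j != 0 & forall k, k \in s -> exists c, a k = c * a j].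
Proof.
elim: s => [[j]|x s IH]; first by rewrite in_nil.
move=> [j]; rewrite in_cons => /orP [/eqP ->|js] aj.
- case: (boolP (has (fun k => a k != 0) s)) => [/hasP [k ks ak]|].
  + have [p [ps ap hp]] := IH (ex_intro2 _ _ k ks ak).
    case: (hcmp (a p) (a x)) => [[c hc]|[c hc]].
    * exists p; split => //; first by rewrite in_cons ps orbT.
      by move=> k'; rewrite in_cons => /orP [/eqP ->|]; [exists c | exact: hp].
    * exists x; split => //; first by rewrite in_cons eqxx.
      move=> k'; rewrite in_cons => /orP [/eqP ->|/hp [c' ->]]; first by exists 1; rewrite mul1r.
      by exists (c' * c); rewrite hc mulrA.
  + move=> /hasPn h; exists x; split => //; first by rewrite in_cons eqxx.
    move=> k; rewrite in_cons => /orP [/eqP ->|ks]; first by exists 1; rewrite mul1r.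
    by exists 0; move: (h k ks); rewrite negbK => /eqP ->; rewrite mul0r.
- have [p [ps ap hp]] := IH (ex_intro2 _ _ j js aj).
  case: (hcmp (a p) (a x)) => [[c hc]|[c hc]].
  + exists p; split => //; first by rewrite in_cons ps orbT.
    by move=> k'; rewrite in_cons => /orP [/eqP ->|]; [exists c | exact: hp].
  + have ax : a x != 0 by apply: contraNneq ap => ax; rewrite hc ax mulr0.
    exists x; split => //; first by rewrite in_cons eqxx.
    move=> k'; rewrite in_cons => /orP [/eqP ->|/hp [c' ->]]; first by exists 1; rewrite mul1r.
    by exists (c' * c); rewrite hc mulrA.
Qed.

Lemma solve_system (s : seq nat) : uniq s ->
  forall (I : Type) (A : I -> nat -> R) (c : I -> N) (y : nat -> M),
  (forall i, \sum_(j <- s) A i j *: y j = f (c i)) ->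
  exists z : nat -> N, forall i, \sum_(j <- s) A i j *: z j = c i.
Proof.
move: {2}(size s) (erefl (size s)) => n; elim: n s => [|n IH] s hs us I A c y hy.
  move: hs => /size0nil hs0; subst s; exists (fun=> 0) => i; rewrite big_nil.
  by apply: finj; rewrite f0 -(hy i) big_nil.
case: (pselect (exists i, exists2 j, j \in s & A i j != 0)) => [[i0 hi0]|hnz].
- have [j [js aj hdiv]] := @pivot_exists (A i0) s hi0.
  set a := A i0 j.
  have hb : forall k, exists b, k \in rem j s -> A i0 k = b * a.
    move=> k; case: (boolP (k \in rem j s)) => hk.
      by have [b hb] := hdiv k (mem_rem hk); exists b.
    by exists 0.
  have [b hbP] := choice hb.
  set s' := rem j s.
  have us' : uniq s' by rewrite rem_uniq.
  have js' : j \notin s' by rewrite mem_rem_uniqF.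
  have sz' : size s' = n by rewrite size_rem // hs.
  have sumS (G : nat -> M) : \sum_(k <- s) G k = G j + \sum_(k <- s') G k.
    by rewrite (big_rem j js).
  have sumSN (G : nat -> N) : \sum_(k <- s) G k = G j + \sum_(k <- s') G k.
    by rewrite (big_rem j js).
  set t := y j + \sum_(k <- s') b k *: y k.
  have at0 : a *: t = f (c i0).
    rewrite -hy sumS scalerDr scaler_sumr; congr (_ + _).
    by apply: eq_big_seq => k ks; rewrite scalerA (hbP k ks) mulrC.
  have [t0 ht0] := ftf _ _ _ aj at0.
  pose A' i k := A i k - A i j * b k.
  pose c' i := c i - A i j *: t0.
  have hy' : forall i, \sum_(k <- s') A' i k *: y k = f (c' i).
    move=> i; rewrite fB fZ -ht0 -hy sumS /t.
    rewrite scalerDr scaler_sumr opprD addrACA subrr add0r -sumrB.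
    by apply: eq_bigr => k _; rewrite /A' scalerBl scalerA.
  have [z' hz'] := IH s' sz' us' I A' c' y hy'.
  exists (fun k => if k == j then t0 - \sum_(k' <- s') b k' *: z' k' else z' k) => i.
  rewrite sumSN eqxx.
  have -> : \sum_(k <- s') A i k *: (if k == j then t0 - \sum_(k' <- s') b k' *: z' k' else z' k)
          = \sum_(k <- s') A i k *: z' k.
    apply: eq_big_seq => k ks; suff -> : (k == j) = false by [].
    by apply/eqP => kj; move: ks; rewrite kj (negbTE js').
  have := hz' i; rewrite /A' /c'.
  under eq_bigr do rewrite scalerBl -scalerA.
  rewrite sumrB -scaler_sumr => h.
  by rewrite scalerBr addrAC -addrA h addrC subrK.
- exists (fun=> 0) => i; rewrite big1_seq //=.
    apply: finj; rewrite f0 -(hy i) big1_seq // => k /= ks.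
    case: (eqVneq (A i k) 0) => [->|nz]; first by rewrite scale0r.
    by exfalso; apply: hnz; exists i; exists k.
  by move=> k _; rewrite scaler0.
Qed.
End Solve.


Section Fcoef.
Variables (T1 T2 : eqType) (g : T1 -> T2).
Let P (c : int * T1) := (c.1, g c.2).

Lemma fcoef_cons (T : eqType) (c : int * T) s p :
  fcoef (c :: s) p = (if c.2 == p then c.1 else 0) + fcoef s p.
Proof. by rewrite /fcoef big_cons; case: ifP => _; rewrite ?add0r. Qed.

Lemma fcoef_nil (T : eqType) p : fcoef ([::] : seq (int * T)) p = 0.
Proof. by rewrite /fcoef big_nil. Qed.

Lemma fcoef_mapE (D : seq T1) (s : seq (int * T1)) q : uniq D ->
  {subset map snd s <= D} ->
  fcoef (map P s) q = \sum_(p <- D | g p == q) fcoef s p.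
Proof.
move=> uD; elim: s => [|c s IH] sD /=.
  by rewrite fcoef_nil big1 // => p _; rewrite fcoef_nil.
rewrite fcoef_cons IH; last by move=> x xs; apply: sD; rewrite inE xs orbT.
under [RHS]eq_bigr do rewrite fcoef_cons.
rewrite big_split /=; congr (_ + _).
have cD : c.2 \in D by apply: sD; rewrite inE eqxx.
rewrite -big_mkcondr /=.
case: eqP => [<-|neq].
  rewrite (eq_bigl (fun p => p == c.2)); first by rewrite -big_filter (@filter_pred1_uniq _ D c.2) // big_seq1.
  by move=> p; case: (eqVneq p c.2) => [->|ne]; rewrite ?eqxx ?andbF.
rewrite big_pred0 // => p; case: (eqVneq c.2 p) => [<-|]; rewrite ?andbF ?andbT //.
exact/eqP.
Qed.

Lemma fcoef_map (s1 s2 : seq (int * T1)) :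
  fcoef s1 =1 fcoef s2 -> fcoef (map P s1) =1 fcoef (map P s2).
Proof.
move=> h q; set D := undup (map snd s1 ++ map snd s2).
have uD : uniq D by apply: undup_uniq.
rewrite (@fcoef_mapE D) // ?(@fcoef_mapE D) //.
- by apply: eq_bigr => p _; rewrite h.
- by move=> x xs; rewrite mem_undup mem_cat xs orbT.
- by move=> x xs; rewrite mem_undup mem_cat xs.
Qed.
End Fcoef.


Section TensorPure.
Variable R : comNzRingType.
Variables (N M L : lmodType R).

Definition gen_elems (g : tensor_gen M L) : seq M :=
  match g with
  | TGaddl m1 m2 _ => [:: m1 + m2; m1; m2]
  | TGaddr m _ _ => [:: m]
  | TGscale r m _ => [:: r *: m; m]
  end.

Definition gen_map (p : M -> N) (g : tensor_gen M L) : tensor_gen N L :=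
  match g with
  | TGaddl m1 m2 l => TGaddl (p m1) (p m2) l
  | TGaddr m l1 l2 => TGaddr (p m) l1 l2
  | TGscale r m l => TGscale r (p m) l
  end.

Definition gen_ok (p : M -> N) (g : tensor_gen M L) : Prop :=
  match g with
  | TGaddl m1 m2 _ => p (m1 + m2) = p m1 + p m2
  | TGaddr _ _ _ => True
  | TGscale r m _ => p (r *: m) = r *: p m
  end.

Definition liftP (p : M -> N) (c : int * (M * L)) : int * (N * L) :=
  (c.1, (fun ml : M * L => (p ml.1, ml.2)) c.2).

Lemma expand_map p g : gen_ok p g ->
  tensor_gen_expand (gen_map p g) = map (liftP p) (tensor_gen_expand g).
Proof. by case: g => [m1 m2 l|m l1 l2|r m l] /= h; rewrite /liftP /= ?h. Qed.

Lemma flatten_map_gen p (gs : seq (int * tensor_gen M L)) :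
  (forall g, List.In g (map snd gs) -> gen_ok p g) ->
  flatten [seq [seq (g.1 * c.1, c.2) | c <- tensor_gen_expand g.2]
          | g <- map (fun g => (g.1, gen_map p g.2)) gs]
  = map (liftP p) (flatten [seq [seq (g.1 * c.1, c.2) | c <- tensor_gen_expand g.2]
          | g <- gs]).
Proof.
elim: gs => //= g gs IH h; rewrite map_cat IH; last by move=> g' hg'; apply: h; right.
congr (_ ++ _); rewrite expand_map; last by apply: h; left.
by rewrite -!map_comp; apply: eq_map => -[a [m l]].
Qed.

Lemma sum_delta (V : lmodType R) n (w : nat -> V) k : (k < n)%N ->
  \sum_(j <- iota 0 n) ((j == k)%:R : R) *: w j = w k.
Proof.
move=> kn; rewrite (big_rem k) ?mem_iota //= eqxx scale1r big1_seq ?addr0 // => j /= jin.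
have: j != k.
  by apply: contraTneq jin => ->; rewrite mem_rem_uniqF // iota_uniq.
by move/negbTE => ->; rewrite scale0r.
Qed.

Hypothesis hcmp : forall a b : R, (exists c, b = c * a) \/ (exists c, a = c * b).
Variable f : N -> M.
Hypothesis flin : linear f.
Hypothesis finj : injective f.
Hypothesis ftf : forall (r : R) (m : M) (x : N), r != 0 -> r *: m = f x -> exists x', m = f x'.

Lemma tensor_pure : tensor_map_injective f L.
Proof.
have f0 : f 0 = 0.
  move: (flin 1 0 0); rewrite scale1r addr0 scale1r => h.
  by apply: (addrI (f 0)); rewrite addr0 -h.
move=> s [gs hgs].
set E := [seq f x.1 | x <- s] ++ flatten [seq gen_elems g.2 | g <- gs].
set E' := undup E; set n := size E'.
pose idx m := index m E'; pose y j := nth 0 E' j.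
have hyE m : m \in E -> y (idx m) = m by move=> mE; rewrite /y /idx nth_index // mem_undup.
have hidx m : m \in E -> (idx m < n)%N by move=> mE; rewrite /idx /n index_mem mem_undup.
have inE1 x : x \in s -> f x.1 \in E.
  by move=> xs; rewrite mem_cat (map_f (fun x => f x.1) xs).
have inE2 g : List.In g (map snd gs) -> forall m, m \in gen_elems g -> m \in E.
  move=> gin m mg; rewrite mem_cat; apply/orP; right.
  clear -gin mg; elim: gs gin => //= g' gs IH [eg|gin]; rewrite mem_cat.
    by rewrite eg mg.
  by rewrite IH ?orbT.
pose I := ({x : N * L | x \in s} + {g : tensor_gen M L | List.In g (map snd gs)})%type.
pose d (k j : nat) : R := (j == k)%:R.
pose A (i : I) j : R :=
  match i with
  | inl x => d (idx (f (sval x).1)) j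
  | inr g => match sval g with
             | TGaddl m1 m2 _ => d (idx (m1 + m2)) j - d (idx m1) j - d (idx m2) j
             | TGaddr _ _ _ => 0
             | TGscale r m _ => d (idx (r *: m)) j - r * d (idx m) j
             end
  end.
pose c (i : I) : N := match i with inl x => (sval x).1 | inr _ => 0 end.
have sumE (V : lmodType R) (w : nat -> V) (i : I) :
   \sum_(j <- iota 0 n) A i j *: w j =
   match i with
   | inl x => w (idx (f (sval x).1))
   | inr g => match sval g with
             | TGaddl m1 m2 _ => w (idx (m1 + m2)) - w (idx m1) - w (idx m2)
             | TGaddr _ _ _ => 0
             | TGscale r m _ => w (idx (r *: m)) - r *: w (idx m)
             end
   end.
  case: i => [[x xs]|[g gin]] /=.
    by rewrite sum_delta // hidx // inE1.
  have hg := inE2 g gin.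
  case: g gin hg => [m1 m2 l|m l1 l2|r m l] gin hg /=.
  - rewrite (eq_bigr (fun j => d (idx (m1+m2)) j *: w j - d (idx m1) j *: w j - d (idx m2) j *: w j)); last by move=> j _; rewrite !scalerBl.
    by rewrite !sumrB !sum_delta // hidx // hg // !inE eqxx ?orbT.
  - by rewrite big1 // => j _; rewrite scale0r.
  - rewrite (eq_bigr (fun j => d (idx (r*:m)) j *: w j - r *: (d (idx m) j *: w j))); last by move=> j _; rewrite scalerBl scalerA.
    by rewrite sumrB -scaler_sumr !sum_delta // hidx // hg // !inE eqxx ?orbT.
have hy : forall i, \sum_(j <- iota 0 n) A i j *: y j = f (c i).
  move=> i; rewrite sumE; case: i => [[x xs]|[g gin]] /=.
    by rewrite hyE // inE1.
  have hg := inE2 g gin.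
  case: g gin hg => [m1 m2 l|m l1 l2|r m l] gin hg /=.
  - by rewrite !hyE ?hg ?inE ?eqxx ?orbT // f0 addrAC addrK subrr.
  - by rewrite f0.
  - by rewrite !hyE ?hg ?inE ?eqxx ?orbT // subrr f0.
have [z hz] := @solve_system R hcmp N M f flin finj ftf _ (iota_uniq 0 n) I A c y hy.
pose p m := z (idx m).
have hp1 x : x \in s -> p (f x.1) = x.1.
  by move=> xs; have := hz (inl (exist _ x xs)); rewrite sumE.
have hp2 g : List.In g (map snd gs) -> gen_ok p g.
  move=> gin; have := hz (inr (exist _ g gin)); rewrite sumE /=.
  case: g gin => [m1 m2 l|m l1 l2|r m l] gin //= /eqP; rewrite ?subr_eq0 => /eqP.
    by move=> h; rewrite /p -h [_ + (_ - _)]addrC subrK.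
  by [].
exists (map (fun g => (g.1, gen_map p g.2)) gs) => q.
rewrite flatten_map_gen //.
have -> : [seq (1%:Z, x) | x <- s] =
  map (liftP p) [seq (1%:Z, x) | x <- [seq (f x.1, x.2) | x <- s]].
  rewrite -!map_comp; apply/eq_in_map => -[x l] xs /=.
  by rewrite /liftP /= (hp1 (x, l)).
exact: (@fcoef_map _ _ (fun ml : M * L => (p ml.1, ml.2)) _ _ hgs q).
Qed.
End TensorPure.


Section Val.
Variables (F : fieldType) (RR : realType) (v : valuation F RR).
Local Open Scope ereal_scope.

Lemma v0E : v 0%R = +oo. Proof. by apply/(valuation_eq_inf v). Qed.

Lemma vfin x : x != 0%R -> v x = (fine (v x))%:E.
Proof.
move=> x0; have := valuation_neq_ninf v x; case E: (v x) => [r| |] //= _.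
by move/(valuation_eq_inf v): E => /eqP; rewrite (negbTE x0).
Qed.

Lemma vfin_num x : x != 0%R -> v x \is a fin_num.
Proof. by move/vfin => ->. Qed.

Lemma v1 : v 1%R = 0.
Proof.
have := valuation_mul v 1%R 1%R; rewrite mulr1 (@vfin 1%R (oner_neq0 F)).
set r := fine _ => /eqP; rewrite -EFinD eqe => /eqP h.
by congr (_%:E); lra.
Qed.

Lemma vN1 : v (-1)%R = 0.
Proof.
have hn : (-1 : F)%R != 0%R by rewrite oppr_eq0 oner_neq0.
have := valuation_mul v (-1)%R (-1)%R; rewrite mulrNN mulr1 v1.
rewrite (@vfin (-1)%R hn); set r := fine _ => /eqP.
rewrite -EFinD eqe => /eqP h; congr (_%:E); lra.
Qed.

Lemma vN x : v (- x)%R = v x.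
Proof. by rewrite -mulN1r valuation_mul vN1 add0e. Qed.

Lemma v_add_strict a b : v a < v b -> v (a + b)%R = v a.
Proof.
move=> ab; apply/eqP; rewrite eq_le; apply/andP; split; last first.
  by have := valuation_add v a b; rewrite min_l // ltW.
have := valuation_add v (a + b)%R (- b)%R; rewrite vN addrK => h.
rewrite leNgt; apply/negP => hlt.
move: h; rewrite ge_min => /orP [] h.
  by move: (lt_le_trans hlt h); rewrite ltxx.
by move: (lt_le_trans ab h); rewrite ltxx.
Qed.

Lemma vdiv_ge0 x y : y != 0%R -> v y <= v x -> 0 <= v (x / y)%R.
Proof.
move=> y0 hyx; have e : x = (x / y * y)%R by rewrite divfK.
move: hyx; rewrite {1}e valuation_mul.
rewrite -{1}(add0e (v y)) leeD2rE //; exact: vfin_num.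
Qed.

Definition vmk (x : F) (hx : 0 <= v x) : vring v := @VRing F RR v x hx.

Lemma vring_cmp (a b : vring v) :
  (exists c, b = (c * a)%R) \/ (exists c, a = (c * b)%R).
Proof.
case: (eqVneq (val a) 0%R) => [a0|a0].
  right; exists 0%R; apply: val_inj; by rewrite rmorphM /= a0 ?rmorph0 mul0r.
case: (leP (v (val a)) (v (val b))) => hab.
  left; have h := vdiv_ge0 _ _ a0 hab.
  exists (vmk _ h); apply: val_inj; by rewrite rmorphM /= divfK.
have b0 : val b != 0%R.
  by apply: contra_ltN hab => /eqP ->; rewrite v0E leey.
right; have h := vdiv_ge0 _ _ b0 (ltW hab).
exists (vmk _ h); apply: val_inj; by rewrite rmorphM /= divfK.
Qed.

Lemma vring_ge0 (a : vring v) : 0 <= v (val a).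
Proof. exact: (vvalP a). Qed.

Lemma vring_mulf_eq0 (a b : vring v) : (a * b == 0)%R = (a == 0%R) || (b == 0%R).
Proof.
by rewrite -!(inj_eq val_inj) rmorphM /= ?rmorph0 mulf_eq0.
Qed.
End Val.


Section Argmin.
Variable RR : realType.
Local Open Scope ereal_scope.

Lemma argmin_nat (w : nat -> \bar RR) K n0 : (n0 < K)%N ->
  (forall k, (K <= k)%N -> w n0 <= w k) ->
  exists n1, (forall k, w n1 <= w k) /\ (forall k, (k < n1)%N -> w n1 < w k).
Proof.
move=> n0K hK.
have [k0 [_ hk0]] : exists k0, (k0 <= K)%N /\ forall k, (k <= K)%N -> w k0 <= w k.
  elim: (K) => [|K' [k0 [hk0 hm]]].
    by exists 0%N; split => // k; rewrite leqn0 => /eqP ->.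
  case: (leP (w k0) (w K'.+1)) => h.
    exists k0; split; first exact: leqW.
    by move=> k; rewrite leq_eqVlt => /orP [/eqP ->|]; [|rewrite ltnS; exact: hm].
  exists K'.+1; split => // k; rewrite leq_eqVlt => /orP [/eqP ->//|].
  by rewrite ltnS => /hm; apply: le_trans; apply: ltW.
have glob k : w k0 <= w k.
  case: (leqP k K) => [/hk0 //|/ltnW /hK]; apply: le_trans; apply: hk0; exact: ltnW.
have ex : exists k, w k == w k0 by exists k0.
case: (ex_minnP ex) => n1 /eqP h1 hmin.
exists n1; split; first by move=> k; rewrite h1.
move=> k kn; rewrite lt_neqAle h1 glob andbT.
apply/negP => /eqP e; have := hmin k; rewrite -e eqxx => /(_ isT).
by rewrite leqNgt kn.
Qed.
End Argmin.

Section PS.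
Variables (F : fieldType) (RR : realType) (v : valuation F RR).
Local Notation R := (vring v).

Lemma coefs_mul (x u : pseries R) n :
  coefs (x * u) n = \sum_(i < n.+1) coefs x i * coefs u (n - i).
Proof. by []. Qed.

Lemma coefs0 n : coefs (0 : pseries R) n = 0.
Proof. by []. Qed.

Lemma split_sum (V : zmodType) (G : nat -> V) n1 N : (n1 <= N)%N ->
  \sum_(i < N.+1) G i = G n1 + \sum_(i < N.+1 | (i : nat) != n1) G i.
Proof.
by move=> hn; rewrite (bigD1 (Ordinal (hn : (n1 < N.+1)%N))) //=.
Qed.

Lemma ps_domain (x u : pseries R) : x * u = 0 -> u != 0 -> x = 0.
Proof.
move=> hxu u0; case: (eqVneq x 0) => // x0; exfalso.
have ex : exists n, coefs x n != 0.
  case: (pselect (exists n, coefs x n != 0)) => // h; exfalso; move/eqP: x0; apply; apply: pseriesP => n /=.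
  by apply/eqP; apply/negPn/negP => hn; apply: h; exists n.
have eu : exists n, coefs u n != 0.
  case: (pselect (exists n, coefs u n != 0)) => // h; exfalso; move/eqP: u0; apply; apply: pseriesP => n /=.
  by apply/eqP; apply/negPn/negP => hn; apply: h; exists n.
case: (ex_minnP ex) => n1 hx1 hmx.
case: (ex_minnP eu) => m1 hu1 hmu.
have := congr1 (fun p : pseries R => coefs p (n1 + m1)%N) hxu; rewrite coefs_mul coefs0.
rewrite (@split_sum _ (fun i => coefs x i * coefs u (n1 + m1 - i)) n1 (n1 + m1)%N (leq_addr m1 n1)) addKn big1 ?addr0.
  by move/eqP; rewrite vring_mulf_eq0 (negbTE hx1) (negbTE hu1).
move=> i /= ne; case: (ltngtP i n1) => hi.
- have: coefs x i == 0.
    by apply/negPn/negP => h; have := hmx i h; rewrite leqNgt hi.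
  by move/eqP ->; rewrite mul0r.
- have: coefs u (n1 + m1 - i) == 0.
    apply/negPn/negP => h; have := hmu _ h; rewrite leqNgt; move/negP; apply.
    by have := ltn_ord i; lia.
  by move/eqP ->; rewrite mulr0.
- by move: ne; rewrite hi eqxx.
Qed.
End PS.


Section Gauss.
Variables (F : fieldType) (RR : realType) (v : valuation F RR).
Local Notation R := (vring v).
Local Notation vc x k := (v (val (coefs x k))).

Lemma gauss (x u : pseries R) (rho : RR) :
  ereal_inf (range (fun n => vc u n)) = 0%E ->
  (forall N, (rho%:E <= vc (x * u)%R N)%E) ->
  forall n, (rho%:E <= vc x n)%E.
Proof.
move=> hu hxu n; rewrite leNgt; apply/negP => hlt.
have xn0 : val (coefs x n) != 0.
  by apply: contra_ltN hlt => /eqP ->; rewrite v0E leey.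
set a := fine (vc x n).
have ea : vc x n = a%:E by rewrite /a -vfin.
have arho : a < rho by move: hlt; rewrite ea lte_fin.
pose eps := (rho - a) / 3.
have eps0 : 0 < eps by rewrite /eps divr_gt0 // subr_gt0.
have [m um] : exists m, (vc u m < eps%:E)%E.
  have : (ereal_inf (range (fun n => vc u n)) < eps%:E)%E by rewrite hu lte_fin.
  by move/ereal_inf_lt => [y [m _ <-] hy]; exists m.
have um0 : val (coefs u m) != 0.
  by apply: contra_ltN um => /eqP ->; rewrite v0E leey.
set b := fine (vc u m).
have eb : vc u m = b%:E by rewrite /b -vfin.
have beps : b < eps by move: um; rewrite eb lte_fin.
pose t := eps / (n + m).+1%:R.
have t0 : 0 < t by rewrite /t divr_gt0.
pose wx k := (vc x k + (k%:R * t)%:E)%E.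
pose wu k := (vc u k + (k%:R * t)%:E)%E.
have wxge k : ((k%:R * t)%:E <= wx k)%E by rewrite /wx leeDr // vring_ge0.
have wuge k : ((k%:R * t)%:E <= wu k)%E by rewrite /wu leeDr // vring_ge0.
have amin (w : nat -> \bar RR) (k0 : nat) (c : RR) :
    w k0 = c%:E -> (forall k, ((k%:R * t)%:E <= w k)%E) ->
    exists n1, (forall k, (w n1 <= w k)%E) /\ (forall k, (k < n1)%N -> (w n1 < w k)%E).
  move=> wk0 hw.
  have c0 : 0 <= c.
    have := hw k0; rewrite wk0 lee_fin; apply: le_trans.
    by rewrite mulr_ge0 // ltW.
  pose K := Num.bound (c / t).
  have hK : c < K%:R * t.
    by rewrite -ltr_pdivrMr // archi_boundP // divr_ge0 // ltW.
  apply: (@argmin_nat _ w K k0).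
    have := hw k0; rewrite wk0 lee_fin => h.
    rewrite ltnNge; apply/negP => hKk.
    have : K%:R * t <= k0%:R * t by rewrite ler_pM2r // ler_nat.
    lra.
  move=> k hk; apply: le_trans (hw k); rewrite wk0 lee_fin.
  apply: le_trans (ltW hK) _; by rewrite ler_pM2r // ler_nat.
have [n1 [hn1a hn1b]] := amin wx n (a + n%:R * t) ltac:(by rewrite /wx ea) wxge.
have [m1 [hm1a hm1b]] := amin wu m (b + m%:R * t) ltac:(by rewrite /wu eb) wuge.
set N := (n1 + m1)%N.
have nz1 : val (coefs x n1) != 0.
  apply/eqP => e; have := hn1a n; by rewrite /wx e ea v0E addye.
have nz2 : val (coefs u m1) != 0.
  apply/eqP => e; have := hm1a m; by rewrite /wu e eb v0E addye.
set A1 := val (coefs x n1); set B1 := val (coefs u m1).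
have eA : v A1 = (fine (v A1))%:E by apply: vfin.
have eB : v B1 = (fine (v B1))%:E by apply: vfin.
set mu := (v A1 + v B1)%E.
have emu : mu = (fine (v A1) + fine (v B1))%:E by rewrite /mu eA eB.
have fx1 : wx n1 \is a fin_num by rewrite /wx eA.
have fu1 : wu m1 \is a fin_num by rewrite /wu eB.
have eqw i : (i <= N)%N -> ((vc x i + vc u (N - i)%N) + ((N%:R * t)%:E) = wx i + wu (N - i)%N)%E.
  move=> iN; rewrite /wx /wu addeACA -EFinD -mulrDl -natrD subnKC //.
have eqw1 : (mu + ((N%:R * t)%:E) = wx n1 + wu m1)%E.
  by have := eqw n1 (leq_addr _ _); rewrite /N addKn.
have hrest : (mu < v (\sum_(i < N.+1 | (i : nat) != n1) val (coefs x i) * val (coefs u (N - i)))%R)%E.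
  apply: (big_ind (fun y => mu < v y)%E).
  - by rewrite v0E emu ltey.
  - move=> y1 y2 h1 h2; apply: lt_le_trans (valuation_add _ _ _); by rewrite lt_min h1 h2.
  - move=> i /= ne; rewrite valuation_mul.
    have iN : (i <= N)%N by rewrite -ltnS ltn_ord.
    rewrite -(@lteD2rE _ ((N%:R * t)%:E)) // eqw // eqw1.
    case: (ltngtP i n1) => hi.
    + exact: lte_leD fu1 (hn1b _ hi) (hm1a _).
    + apply: lee_ltD fx1 (hn1a _) (hm1b _ _); move: iN hi; rewrite /N; lia.
    + by move: ne; rewrite hi eqxx.
have hcoef : vc (x * u)%R N = mu.
  rewrite coefs_mul rmorph_sum.
  under eq_bigr do rewrite rmorphM.
  rewrite (@split_sum _ (fun i => val (coefs x i) * val (coefs u (N - i))) n1 N (leq_addr m1 n1)).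
  rewrite /= {2}/N addKn v_add_strict; first by rewrite valuation_mul.
  by rewrite valuation_mul.
have := hxu N; rewrite hcoef => h1.
have h2 : (mu <= wx n1 + wu m1)%E.
  by rewrite /mu leeD // /wx /wu leeDl // lee_fin mulr_ge0 // ltW.
have h3 : (wx n1 + wu m1 <= wx n + wu m)%E by rewrite leeD.
move: (le_trans h1 (le_trans h2 h3)); rewrite /wx /wu ea eb -EFinD lee_fin.
have ht : t * (n + m).+1%:R = eps by rewrite /t divfK // pnatr_eq0.
move: ht; rewrite -addn1 !natrD mulrDr mulrDr mulr1.
have e3 : 3 * eps = rho - a by rewrite /eps mulrC divfK // pnatr_eq0.
move: e3 beps t0 arho; rewrite ![t * _]mulrC.
move: (n%:R * t) (m%:R * t) => p q.
move=> H1 H2 H3 H4 H5 H6; clear -H1 H2 H3 H4 H5 H6; lra.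
Qed.
End Gauss.


Section Main.
Variables (F : fieldType) (RR : realType) (v : valuation F RR).
Local Notation R := (vring v).

Lemma v0_neq0 (u : pseries R) : v0 u = 0%E -> u != 0.
Proof.
move=> hu; apply/eqP => e; move: hu; rewrite e.
have -> : v0 (0 : pseries R) = +oo%E.
  apply/ereal_inf_pinfty => y [n _ <-]; rewrite /=.
  by have := @v0E F RR v.
by [].
Qed.

Lemma ps_tf (r : R) (a : pseries R) : r != 0 -> r *: a = 0 -> a = 0.
Proof.
move=> r0 e; apply: pseriesP => n /=.
have := congr1 (fun p : pseries R => coefs p n) e; rewrite coefs_scale /= => /eqP.
by rewrite vring_mulf_eq0 (negbTE r0) /= => /eqP.
Qed.

Lemma gauss_div (x u a : pseries R) (r : R) :
  r != 0 -> v0 u = 0%E -> x * u = r *: a -> exists x', x = r *: x'.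
Proof.
move=> r0 hu e.
have r0F : val r != 0 by apply: contra r0 => /eqP h; apply/eqP; apply: val_inj; rewrite h.
set rho := fine (v (val r)).
have erho : v (val r) = rho%:E by apply: vfin.
have hxu N : (rho%:E <= v (val (coefs (x * u)%R N)))%E.
  rewrite e coefs_scale rmorphM valuation_mul -erho.
  by rewrite leeDl // vring_ge0.
have hn := @gauss F RR v x u rho hu hxu.
have hn' n : (v (val r) <= v (val (coefs x n)))%E by rewrite erho.
pose c n := @vmk F RR v _ (@vdiv_ge0 F RR v _ _ r0F (hn' n)).
exists (PSeries c); apply: pseriesP => n /=.
by apply: val_inj; rewrite rmorphM /= mulrC divfK.
Qed.

Variables (T : comAlgType R) (iota : {lrmorphism pseries R -> T}).
Hypothesis hloc : is_localization [set f | v0 f = 0%E] iota.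

Lemma iota_inj : injective iota.
Proof.
have [_ _ h3] := hloc.
move=> a b e; have : iota (a - b) = 0.
  by rewrite raddfB; apply/eqP; rewrite subr_eq0; apply/eqP; exact: e.
move/h3 => [u hu hua]; apply/eqP; rewrite -subr_eq0; apply/eqP.
have hu0 : u != 0 by apply: v0_neq0; exact: hu.
have hab : (a - b) * u = 0 by rewrite mulrC.
exact: (@ps_domain F RR v (a - b) u hab hu0).
Qed.

Let io : pseries R -> T := iota.
Let ioM a b : io (a * b) = io a * io b. Proof. exact: rmorphM. Qed.
Let ioZ (r : R) a : io (r *: a) = r *: io a. Proof. exact: linearZ. Qed.
Let io0 : io 0 = 0. Proof. exact: rmorph0. Qed.
Let io_inj : injective io. Proof. exact: iota_inj. Qed.
Let h1 : forall u, v0 u = 0%E -> exists b, b * io u = 1.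
Proof. by have [h1 _ _] := hloc. Qed.
Let h2 : forall b, exists a u, v0 u = 0%E /\ b * io u = io a.
Proof. by have [_ h2 _] := hloc. Qed.

Lemma iota_tf (r : R) (m : T) (x : pseries R) :
  r != 0 -> r *: m = iota x -> exists x', m = iota x'.
Proof.
move=> r0 e; change (r *: m = io x) in e.
have [a [u [hu hmu]]] := h2 m.
have hxu : x * u = r *: a.
  by apply: io_inj; rewrite ioM -e -scalerAl hmu ioZ.
have [x' ex'] := @gauss_div x u a r r0 hu hxu.
exists x'; change (m = io x'); set d := m - io x'.
have rd : r *: d = 0 by rewrite scalerBr e -ioZ -ex' subrr.
have [a' [w [hw hdw]]] := h2 d.
have : io (r *: a') = 0 by rewrite ioZ -hdw scalerAl rd mul0r.
rewrite -io0 => /io_inj /(@ps_tf r a' r0) a'0.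
move: hdw; rewrite a'0 io0 => hdw.
have [c hc] := h1 w hw.
apply/eqP; rewrite -subr_eq0 -/d; apply/eqP.
by rewrite -[d]mulr1 -hc mulrCA hdw mulr0.
Qed.
End Main.

Local Open Scope classical_set_scope.

Theorem proposition4p2 (F : fieldType) (RR : realType) (v : valuation F RR)
  (hdense : dense (value_group v)) (hproper : value_group v <> setT)
  (T : comAlgType (vring v)) (iota : {lrmorphism pseries (vring v) -> T})
  (hloc : is_localization [set f | v0 f = 0%E] iota) :
  pure_embedding (iota : pseries (vring v) -> T) /\
  forall I : Type, pure_embedding (map_pow (I:=I) (iota : pseries (vring v) -> T)).
Proof.
have hinj := @iota_inj F RR v T iota hloc.
have htf := @iota_tf F RR v T iota hloc.
have hlin : linear (iota : pseries (vring v) -> T) by exact: linearP.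
split.
  split => // L.
  exact: (@tensor_pure _ _ _ L (@vring_cmp F RR v) _ hlin hinj htf).
move=> I.
have hlin' : linear (map_pow (I:=I) (iota : pseries (vring v) -> T)).
  move=> a x y; apply: funext => i; exact: hlin.
have hinj' : injective (map_pow (I:=I) (iota : pseries (vring v) -> T)).
  move=> x y e; apply: funext => i; apply: hinj; exact: (congr1 (fun g => g i) e).
have htf' : forall (r : vring v) (m : I -> T) (x : I -> pseries (vring v)),
    r != 0 -> r *: m = map_pow (iota : pseries (vring v) -> T) x ->
    exists x', m = map_pow (iota : pseries (vring v) -> T) x'.
  move=> r m x r0 e.
  have h i : exists y, m i = iota y.
    by apply: (htf r (m i) (x i) r0); exact: (congr1 (fun g => g i) e).
  have [g hg] := choice h.
  by exists g; apply: funext => i; exact: hg.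
split => // L.
exact: (@tensor_pure _ _ _ L (@vring_cmp F RR v) _ hlin' hinj' htf').
Qed.
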